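(* Let $n\ge 1$, let $\delta>0$, let $\hat{\mathbf{B}}_t\in\mathbb{R}^{n\times n}$ be a symmetric positive definite matrix, and let $\mathbf{v}_t,\hat{\mathbf{r}}_t\in\mathbb{R}^n$. Consider the semidefinite program \[ \hat{\mathbf{B}}_{t+1}=\operatorname*{argmin}_{\mathbf{Z}}\ \operatorname{tr}\!\left[\hat{\mathbf{B}}_t^{-1}(\mathbf{Z}-\delta\mathbf{I})\right]-\log\det\!\left[\hat{\mathbf{B}}_t^{-1}(\mathbf{Z}-\delta\mathbf{I})\right]-n \quad\text{s.t.}\quad \mathbf{Z}\mathbf{v}_t=\hat{\mathbf{r}}_t,\ \ \mathbf{Z}\succeq\mathbf{0}, \] where $\mathbf{Z}$ ranges over symmetric $n\times n$ matrices (with the objective defined where $\mathbf{Z}-\delta\mathbf{I}\succ\mathbf{0}$). Define the corrected gradient variation $\tilde{\mathbf{r}}_t:=\hat{\mathbf{r}}_t-\delta\mathbf{v}_t$. If $\tilde{\mathbf{r}}_t^T\mathbf{v}_t=(\hat{\mathbf{r}}_t-\delta\mathbf{v}_t)^T\mathbf{v}_t>0$, then the solution $\hat{\mathbf{B}}_{t+1}$ of this program can be written as \[ \hat{\mathbf{B}}_{t+1}=\hat{\mathbf{B}}_t+\frac{\tilde{\mathbf{r}}_t\tilde{\mathbf{r}}_t^T}{\mathbf{v}_t^T\tilde{\mathbf{r}}_t}-\frac{\hat{\mathbf{B}}_t\mathbf{v}_t\mathbf{v}_t^T\hat{\mathbf{B}}_t}{\mathbf{v}_t^T\hat{\mathbf{B}}_t\mathbf{v}_t}+\delta\mathbf{I}.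 \]
   Context: $\mathbf{I}$ denotes the $n\times n$ identity matrix; $\succeq$ and $\succ$ denote the positive semidefinite and positive definite orders on symmetric matrices. *)

(* Defs.v *)
From HB Require Import structures.
From mathcomp Require Import all_boot all_order all_algebra.
From mathcomp Require Import reals exp.
Set Implicit Arguments. Unset Strict Implicit. Unset Printing Implicit Defensive.
Import Order.TTheory GRing.Theory Num.Theory.
Local Open Scope ring_scope.

Definition bilin {R : realType} {n : nat} (x : 'cV[R]_n) (A : 'M[R]_n) (y : 'cV[R]_n) : R :=
  (x^T *m A *m y) ord0 ord0.

Definition dotv {R : realType} {n : nat} (x y : 'cV[R]_n) : R := (x^T *m y) ord0 ord0.

Definition symmetric_mx {R : realType} {n : nat} (A : 'M[R]_n) : Prop := A^T = A.

Definition psd_mx {R : realType} {n : nat} (A : 'M[R]_n) : Prop :=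
  symmetric_mx A /\ forall x : 'cV[R]_n, 0 <= bilin x A x.

Definition pd_mx {R : realType} {n : nat} (A : 'M[R]_n) : Prop :=
  symmetric_mx A /\ forall x : 'cV[R]_n, x != 0 -> 0 < bilin x A x.

Definition sdp_obj {R : realType} {n : nat} (delta : R) (B Z : 'M[R]_n) : R :=
  let M := invmx B *m (Z - delta%:M) in
  \tr M - ln (\det M) - n%:R.

Definition sdp_feasible {R : realType} {n : nat} (delta : R) (v r : 'cV[R]_n) (Z : 'M[R]_n) : Prop :=
  symmetric_mx Z /\ Z *m v = r /\ psd_mx Z /\ pd_mx (Z - delta%:M).

(* Main.v *)
Require Import Defs.
From HB Require Import structures.
From mathcomp Require Import all_boot all_order all_algebra.
From mathcomp Require Import reals exp.
From mathcomp Require Import lra ring.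
Import Order.TTheory GRing.Theory Num.Theory.
Local Open Scope ring_scope.

Lemma pd_unit (R : realType) n (A : 'M[R]_n) : pd_mx A -> A \in unitmx.
Proof.
move=> [_ HA]; rewrite -row_free_unit; apply: inj_row_free => w Hw.
apply/eqP; apply: contraT => Hw0.
have := HA w^T; rewrite trmx_eq0 => /(_ Hw0).
by rewrite /bilin trmxK Hw mul0mx mxE ltxx.
Qed.

Lemma bilin_congr (R : realType) n (A P : 'M[R]_n) x :
  bilin x (P^T *m A *m P) x = bilin (P *m x) A (P *m x).
Proof. by rewrite /bilin trmx_mul !mulmxA. Qed.

Lemma pd_congr (R : realType) n (A P : 'M[R]_n) :
  pd_mx A -> P \in unitmx -> pd_mx (P^T *m A *m P).
Proof.
move=> [SA HA] UP; split.
  by rewrite /symmetric_mx !trmx_mul trmxK SA mulmxA.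
move=> x Hx; rewrite bilin_congr; apply: HA.
apply: contra Hx => /eqP H.
by rewrite -(mulKmx UP x) H mulmx0.
Qed.

Lemma bilin_block_u (R : realType) m n (A : 'M[R]_m) B C (D : 'M[R]_n) u :
  bilin (col_mx u 0) (block_mx A B C D) (col_mx u 0) = bilin u A u.
Proof.
rewrite /bilin tr_col_mx trmx0 mul_row_block (mul0mx _ C) (mul0mx _ D) !addr0 mul_row_col mulmx0 addr0.
by [].
Qed.

Lemma bilin_block_d (R : realType) m n (A : 'M[R]_m) B C (D : 'M[R]_n) u :
  bilin (col_mx 0 u) (block_mx A B C D) (col_mx 0 u) = bilin u D u.
Proof.
rewrite /bilin tr_col_mx trmx0 mul_row_block (mul0mx _ A) (mul0mx _ B) !add0r mul_row_col mulmx0 add0r.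
by [].
Qed.

Lemma pd_block (R : realType) m n (A : 'M[R]_m) (D : 'M[R]_n) :
  pd_mx (block_mx A 0 0 D) -> pd_mx A /\ pd_mx D.
Proof.
move=> [S H].
have [SA _ _ SD] := eq_block_mx (etrans (esym (tr_block_mx A 0 0 D)) S).
rewrite ?trmx0 in SA SD.
split; split => // x Hx.
- rewrite -(@bilin_block_u _ _ _ A 0 0 D); apply: H; by rewrite col_mx_eq0 negb_and Hx.
- rewrite -(@bilin_block_d _ _ _ A 0 0 D); apply: H; by rewrite col_mx_eq0 negb_and Hx orbT.
Qed.

Lemma dot_self (R : realType) n (u : 'cV[R]_n) :
  (u^T *m u) ord0 ord0 = \sum_i u i 0 ^+ 2.
Proof. by rewrite mxE; apply: eq_bigr => i _; rewrite mxE expr2. Qed.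

Lemma dot_self_ge0 (R : realType) n (u : 'cV[R]_n) : 0 <= (u^T *m u) ord0 ord0.
Proof. by rewrite dot_self sumr_ge0 // => i _; rewrite sqr_ge0. Qed.

Lemma dot_self_gt0 (R : realType) n (u : 'cV[R]_n) : u != 0 -> 0 < (u^T *m u) ord0 ord0.
Proof.
move=> Hu; rewrite lt_def dot_self_ge0 andbT; apply: contra Hu.
rewrite dot_self psumr_eq0 => [/allP H|i _]; last by rewrite sqr_ge0.
apply/eqP/matrixP => i j; rewrite ord1 mxE.
by have := H i (mem_index_enum i); rewrite /= sqrf_eq0 => /eqP.
Qed.


Lemma schur (R : realType) n (S : 'M[R]_(1+n)) : pd_mx S ->
 exists a (b : 'M[R]_(1,n)) (D : 'M[R]_n) (E : 'M[R]_(1+n)),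
 [/\ S = block_mx a%:M b b^T D, 0 < a, \det E = 1,
     E^T *m S *m E = block_mx a%:M 0 0 (D - a^-1 *: (b^T *m b)) &
     pd_mx (D - a^-1 *: (b^T *m b))].
Proof.
move=> HS.
set a := ulsubmx S 0 0; set b := ursubmx S; set D := drsubmx S.
have ES : S = block_mx a%:M b b^T D.
  rewrite -{1}[S]submxK /b trmx_ursub; move: (HS) => [-> _].
  by rewrite [ulsubmx S]mx11_scalar.
have a0 : 0 < a.
  have := HS.2 (col_mx 1%:M 0); rewrite col_mx_eq0 oner_eq0 /= => /(_ isT).
  rewrite {1}ES bilin_block_u /bilin trmx1 mul1mx mulmx1 mxE eqxx.
  by [].
set C := D - a^-1 *: (b^T *m b).
set E : 'M[R]_(1+n) := block_mx 1%:M (- a^-1 *: b) 0 1%:M.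
have dE : \det E = 1 by rewrite /E det_ublock !det1 mulr1.
have EE : E^T *m S *m E = block_mx a%:M 0 0 C.
  rewrite /E ES tr_block_mx !trmx1 trmx0 !mulmx_block.
  rewrite ?mul1mx ?mulmx1 ?mul0mx ?mulmx0 ?add0r ?addr0.
  have tb : (- a^-1 *: b)^T = - a^-1 *: b^T by rewrite linearZ.
  have h1 : a%:M *m (- a^-1 *: b) + b = 0.
    by rewrite mul_scalar_mx scalerA mulrN mulfV ?gt_eqF // scaleN1r addNr.
  have h2 : (- a^-1 *: b)^T *m a%:M + b^T = 0.
    by rewrite tb mul_mx_scalar scalerA mulrN mulfV ?gt_eqF // scaleN1r addNr.
  rewrite h1 h2 mul0mx add0r tb -scalemxAl /C scaleNr addrC.
  by [].
exists a, b, D, E; split => //.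
have : pd_mx (E^T *m S *m E) by apply: pd_congr => //; rewrite unitmxE dE unitr1.
by rewrite EE => /pd_block [].
Qed.


Lemma ln_le_sub1 (R : realType) (a : R) : 0 < a -> ln a <= a - 1.
Proof.
move=> a0; have := expR_ge1Dx (ln a); rewrite lnK ?posrE //; lra.
Qed.

Lemma ln_lt_sub1 (R : realType) (a : R) : 0 < a -> a != 1 -> ln a < a - 1.
Proof.
move=> a0 a1; have : ln a != 0.
  by apply: contra a1 => /eqP H; rewrite -(lnK (x:=a)) ?posrE // H expR0.
move=> /expR_gt1Dx; rewrite lnK ?posrE //; lra.
Qed.

Lemma key (R : realType) n (S : 'M[R]_n) : pd_mx S ->
  0 < \det S /\ ln (\det S) <= \tr S - n%:R /\
  (S != 1%:M -> ln (\det S) < \tr S - n%:R).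
Proof.
elim: n S => [|n IH] S HS.
  rewrite det_mx00 ln1 /mxtrace big_ord0 subrr (flatmx0 S) (flatmx0 1%:M) eqxx.
  by split; [apply: ltr01|split].
have [a [b [D [E [ES a0 dE EE HC]]]]] := @schur R n S HS.
set C := D - a^-1 *: (b^T *m b) in EE HC.
have [dC [lC sC]] := IH _ HC.
have detS : \det S = a * \det C.
  have := congr1 determinant EE.
  by rewrite !det_mulmx det_tr dE mulr1 mul1r det_ublock det_scalar1.
have trS : \tr S = a + \tr D.
  by have := mxtrace_block (a%:M : 'M_1) b b^T D; rewrite mxtrace_scalar -ES.
set t := (b^T^T *m b^T) ord0 ord0.
have trC : \tr C = \tr D - a^-1 * t.
  by rewrite /C raddfB /= mxtraceZ mxtrace_mulC /t trmxK /mxtrace big_ord1.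
have t0 : 0 <= t by apply: dot_self_ge0.
have at0 : 0 <= a^-1 * t by rewrite mulr_ge0 // invr_ge0 ltW.
have lnS : ln (\det S) = ln a + ln (\det C) by rewrite detS lnM ?posrE.
have la := @ln_le_sub1 _ a a0.
have hn : (n.+1)%:R = n%:R + 1 :> R by rewrite mulrSr.
split; first by rewrite detS; apply: mulr_gt0.
rewrite lnS trS hn; split; first lra.
move=> S1.
case: (eqVneq a 1) => [a1|a1]; last by have := @ln_lt_sub1 _ a a0 a1; lra.
case: (eqVneq b 0) => [b0|b0]; last first.
  have : 0 < a^-1 * t by rewrite mulr_gt0 ?invr_gt0 // dot_self_gt0 // trmx_eq0.
  lra.
have C1 : C != 1%:M.
  apply: contra S1 => /eqP C1; apply/eqP.
  move: C1; rewrite /C b0 trmx0 mul0mx scaler0 subr0 => D1.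
  by rewrite ES a1 b0 trmx0 D1 -scalar_mx_block.
have := sC C1; lra.
Qed.


Lemma congr_id (R : realType) n (A : 'M[R]_n) : pd_mx A ->
  exists2 P : 'M[R]_n, P \in unitmx & P^T *m A *m P = 1%:M.
Proof.
elim: n A => [|n IH] A HA.
  exists 1%:M; first by rewrite unitmxE det_mx00 unitr1.
  by rewrite (flatmx0 (_ *m _)) (flatmx0 1%:M).
have [a [b [D [E [ES a0 dE EE HC]]]]] := @schur R n A HA.
set C := D - a^-1 *: (b^T *m b) in EE HC.
have [Q UQ HQ] := IH _ HC.
set s := (Num.sqrt a)^-1.
have s0 : 0 < s by rewrite invr_gt0 sqrtr_gt0.
set F : 'M[R]_(1+n) := block_mx s%:M 0 0 Q.
exists (E *m F).
  rewrite unitmx_mul !unitmxE dE unitr1 /F (det_ublock (s%:M : 'M_1) 0 Q) det_scalar1 unitrM.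
  by rewrite unitfE gt_eqF // -unitmxE UQ.
have sas : s * a * s = 1.
  by rewrite mulrAC -expr2 exprVn sqr_sqrtr ?ltW // mulVf ?gt_eqF.
rewrite trmx_mul.
have -> : F^T *m E^T *m A *m (E *m F) = F^T *m (E^T *m A *m E) *m F by rewrite !mulmxA.
rewrite EE /F tr_block_mx tr_scalar_mx !trmx0.
rewrite !mulmx_block ?mul0mx ?mulmx0 ?addr0 ?add0r -!scalar_mxM sas.
rewrite (mul0mx _ Q) (mul0mx _ s%:M) HQ.
exact: (esym (scalar_mx_block 1 n 1)).
Qed.

Lemma dotvC (R : realType) n (x y : 'cV[R]_n) : dotv x y = dotv y x.
Proof. by rewrite /dotv -[x^T *m y]trmxK trmx_mul trmxK mxE. Qed.

Lemma bilinC (R : realType) n (x y : 'cV[R]_n) A : symmetric_mx A -> bilin x A y = bilin y A x.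
Proof. move=> SA; have H : (x^T *m A *m y)^T = y^T *m A *m x by rewrite !trmx_mul trmxK SA mulmxA.
by rewrite /bilin -H [RHS]mxE. Qed.

Lemma bilinDl (R : realType) n (x y z : 'cV[R]_n) A : bilin (x + y) A z = bilin x A z + bilin y A z.
Proof. by rewrite /bilin raddfD /= !mulmxDl mxE. Qed.
Lemma bilinDr (R : realType) n (x y z : 'cV[R]_n) A : bilin z A (x + y) = bilin z A x + bilin z A y.
Proof. by rewrite /bilin !mulmxDr mxE. Qed.
Lemma bilinZl (R : realType) n (x z : 'cV[R]_n) A c : bilin (c *: x) A z = c * bilin x A z.
Proof. by rewrite /bilin linearZ /= -!scalemxAl mxE. Qed.
Lemma bilinZr (R : realType) n (x z : 'cV[R]_n) A c : bilin z A (c *: x) = c * bilin z A x.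
Proof. by rewrite /bilin -!scalemxAr mxE. Qed.
Lemma bilinNl (R : realType) n (x z : 'cV[R]_n) A : bilin (- x) A z = - bilin x A z.
Proof. by rewrite -scaleN1r bilinZl mulN1r. Qed.
Lemma bilinNr (R : realType) n (x z : 'cV[R]_n) A : bilin z A (- x) = - bilin z A x.
Proof. by rewrite -scaleN1r bilinZr mulN1r. Qed.

Lemma bilin0l (R : realType) n (y : 'cV[R]_n) A : bilin 0 A y = 0.
Proof. by have := @bilinZl R n 0 y A 0; rewrite scale0r mul0r. Qed.

Lemma bilinDm (R : realType) n (x y : 'cV[R]_n) A A' : bilin x (A + A') y = bilin x A y + bilin x A' y.
Proof. by rewrite /bilin mulmxDr mulmxDl mxE. Qed.
Lemma bilinNm (R : realType) n (x y : 'cV[R]_n) A : bilin x (- A) y = - bilin x A y.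
Proof. by rewrite /bilin mulmxN mulNmx mxE. Qed.
Lemma bilinZm (R : realType) n (x y : 'cV[R]_n) A c : bilin x (c *: A) y = c * bilin x A y.
Proof. by rewrite /bilin -scalemxAr -scalemxAl mxE. Qed.
Lemma bilin_rank1 (R : realType) n (x y a b : 'cV[R]_n) :
  bilin x (a *m b^T) y = dotv x a * dotv b y.
Proof.
rewrite /bilin /dotv mulmxA -mulmxA [x^T *m a]mx11_scalar [b^T *m y]mx11_scalar.
by rewrite -scalar_mxM !mxE !eqxx !mulr1n.
Qed.
Lemma dotvZl (R : realType) n (x y : 'cV[R]_n) c : dotv (c *: x) y = c * dotv x y.
Proof. by rewrite /dotv linearZ /= -scalemxAl mxE. Qed.

Lemma cancel_congr (R : realType) n (P X Y : 'M[R]_n) : P \in unitmx ->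
  P^T *m X *m P = P^T *m Y *m P -> X = Y.
Proof.
move=> UP H.
have UPt : P^T \in unitmx by rewrite unitmx_tr.
have := congr1 (fun M => invmx P^T *m M *m invmx P) H => /=.
rewrite !mulmxA !mulVmx // !mul1mx -!mulmxA !mulmxV // !mulmx1.
by [].
Qed.

Theorem lemma1 (R : realType) (n : nat) (hn : (0 < n)%N) (delta : R) (hdelta : 0 < delta)
    (B : 'M[R]_n) (v r : 'cV[R]_n) :
  pd_mx B ->
  0 < dotv (r - delta *: v) v ->
  let rt := r - delta *: v in
  let Bn := B + (dotv v rt)^-1 *: (rt *m rt^T)
              - (bilin v B v)^-1 *: (B *m v *m v^T *m B) + delta%:M in
  sdp_feasible delta v r Bn /\
  (forall Z : 'M[R]_n, sdp_feasible delta v r Z -> Z != Bn ->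
     sdp_obj delta B Bn < sdp_obj delta B Z).
Proof.
move=> HB hpos rt Bn.
have rtE : rt = r - delta *: v by [].
have [SB PB] := HB.
set rho := dotv v rt.
have rho0 : 0 < rho by rewrite /rho dotvC.
have v0 : v != 0.
  apply: contraTneq hpos => ->; by rewrite /dotv mulmx0 mxE ltxx.
set beta := bilin v B v.
have beta0 : 0 < beta by apply: PB.
set W := B + rho^-1 *: (rt *m rt^T) - beta^-1 *: (B *m v *m v^T *m B).
have BnW : Bn = W + delta%:M by [].
clearbody Bn rt.
have WBn : Bn - delta%:M = W by rewrite BnW addrK.
have hv1 : rt^T *m v = rho%:M by rewrite [LHS]mx11_scalar /rho dotvC.
have hv2 : v^T *m B *m v = beta%:M by rewrite [LHS]mx11_scalar.
have e2 : B *m v *m v^T *m B *m v = beta *: (B *m v).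
  by rewrite -!mulmxA (mulmxA v^T) hv2 mul_mx_scalar scalemxAr.
have Wv : W *m v = rt.
  rewrite /W !mulmxDl mulNmx -!scalemxAl e2 -(mulmxA rt) hv1 mul_mx_scalar.
  by rewrite !scalerA !mulVf ?gt_eqF // !scale1r addrAC subrr add0r.
have SW : symmetric_mx W.
  rewrite /symmetric_mx /W !linearD /= linearN /= !linearZ /= !trmx_mul !trmxK SB.
  by rewrite !mulmxA.
have BvvB : B *m v *m v^T *m B = (B *m v) *m (B *m v)^T.
  by rewrite trmx_mul SB mulmxA.
have PW : pd_mx W.
  split => // x x0.
  set p := dotv x rt; set q := bilin x B v; set X := bilin x B x.
  have eW : bilin x W x = X + rho^-1 * (p * p) - beta^-1 * (q * q).
    rewrite /W BvvB !bilinDm bilinNm !bilinZm !bilin_rank1 (@dotvC _ _ (B *m v) x).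
    have dq : dotv x (B *m v) = q by rewrite /dotv mulmxA.
    by rewrite dq (@dotvC _ _ rt x).
  set y := beta *: x - q *: v.
  have qv : bilin v B x = q by rewrite bilinC.
  have eY : bilin y B y = beta * (beta * X - q * q).
    rewrite /y !bilinDl !bilinDr !bilinNl !bilinNr !bilinZl !bilinZr qv -/X -/q -/beta.
    by ring.
  have K0 : 0 <= beta * X - q * q.
    case: (eqVneq y 0) => [y0|y0].
      by move: eY; rewrite y0 bilin0l => /esym/eqP; rewrite mulf_eq0 gt_eqF // => /eqP ->.
    by have := PB y y0; rewrite eY pmulr_rgt0 // => /ltW.
  have hX : X - beta^-1 * (q * q) = beta^-1 * (beta * X - q * q).
    by rewrite mulrBr mulKf ?(gt_eqF beta0).

  have ir : 0 < rho^-1 by rewrite invr_gt0.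
  have ib : 0 < beta^-1 by rewrite invr_gt0.
  have pp : 0 <= p * p by rewrite -expr2 sqr_ge0.
  case: (eqVneq y 0) => [y0|y0]; last first.
    have := PB y y0; rewrite eY pmulr_rgt0 // => K1.
    rewrite eW; have : 0 < beta^-1 * (beta * X - q * q) by rewrite mulr_gt0.
    have : 0 <= rho^-1 * (p * p) by rewrite mulr_ge0 // ltW.
    lra.
  have bx : beta *: x = q *: v by apply/eqP; rewrite -subr_eq0 -/y y0.
  have q0 : q != 0.
    apply: contra x0 => /eqP q0; move: bx; rewrite q0 scale0r => /eqP.
    by rewrite scaler_eq0 gt_eqF.
  have bp : beta * p = q * rho.
    by rewrite /p -dotvZl bx dotvZl.
  have p0 : p != 0.
    apply: contra q0 => /eqP p0; move: bp; rewrite p0 mulr0 => /esym/eqP.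
    by rewrite mulf_eq0 (gt_eqF rho0) orbF.
  have pp1 : 0 < p * p by rewrite -expr2 exprn_even_gt0.
  rewrite eW; have : 0 < rho^-1 * (p * p) by rewrite mulr_gt0.
  have : 0 <= beta^-1 * (beta * X - q * q) by rewrite mulr_ge0 // ltW.
  lra.
have Bu : B \in unitmx by apply: pd_unit.
have SBn : symmetric_mx Bn.
  by rewrite /symmetric_mx BnW linearD /= SW tr_scalar_mx.
split.
  split => //; split.
    by rewrite BnW mulmxDl Wv mul_scalar_mx rtE subrK.
  split; last by rewrite WBn.
  split => // x; case: (eqVneq x 0) => [->|x0]; first by rewrite bilin0l.
  rewrite BnW bilinDm.
  have -> : bilin x delta%:M x = delta * (x^T *m x) ord0 ord0.
    by rewrite /bilin mul_mx_scalar -scalemxAl mxE.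
  have := PW.2 x x0; have := @dot_self_ge0 _ _ x.
  have := hdelta.
  nra.
move=> Z [SZ [Zv [_ PZ']]] ZB.
set W' := Z - delta%:M in PZ' *.
have W'v : W' *m v = rt by rewrite /W' mulmxBl Zv mul_scalar_mx rtE.
have [P UP HP] := @congr_id _ _ _ PW.
set S := P^T *m W' *m P.
have PS : pd_mx S by apply: pd_congr.
have [dS [_ sS]] := @key _ _ _ PS.
have S1 : S != 1%:M.
  apply: contra ZB => /eqP S1; apply/eqP.
  have WW : W' = W by apply: (@cancel_congr _ _ P _ _ UP); rewrite -/S S1 HP.
  by rewrite BnW -WW /W' subrK.
set H := P *m P^T.
have PtW : P^T *m W = invmx P.
  have := congr1 (fun M => M *m invmx P) HP => /=.
  by rewrite -(mulmxA (P^T *m W)) mulmxV // mulmx1 mul1mx.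
have HW : H *m W = 1%:M by rewrite /H -mulmxA PtW mulmxV.
have Hrt : H *m rt = v by rewrite -Wv mulmxA HW mul1mx.
set D := W' - W.
have Dv : D *m v = 0 by rewrite /D mulmxBl W'v Wv subrr.
have SD : D^T = D by rewrite /D linearB /= PZ'.1 SW.
have vD : v^T *m D = 0 by rewrite -SD -trmx_mul Dv trmx0.
have t3 : B *m v *m v^T *m B *m invmx B *m D = 0.
  by rewrite -(mulmxA _ B) mulmxV // mulmx1 -mulmxA vD mulmx0.
have t2 : rt *m rt^T *m invmx B *m D = rt *m (rt^T *m invmx B *m D).
  by rewrite !mulmxA.
have WBD : W *m invmx B *m D = D + rho^-1 *: (rt *m (rt^T *m invmx B *m D)).
  rewrite /W !mulmxDl !mulNmx -!scalemxAl t3 scaler0 subr0 t2.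
  by rewrite mulmxV // mul1mx.
have trB : \tr (invmx B *m D) = \tr (H *m D).
  rewrite -[invmx B *m D](mul1mx) -HW.
  have -> : H *m W *m (invmx B *m D) = H *m (W *m invmx B *m D) by rewrite !mulmxA.
  rewrite WBD mulmxDr raddfD /= -scalemxAr linearZ /= (mulmxA H rt) Hrt (mxtrace_mulC v).
  by rewrite -(mulmxA _ D) Dv mulmx0 linear0 mulr0 addr0.
have trS : \tr (invmx B *m W') - \tr (invmx B *m W) = \tr S - n%:R.
  rewrite -raddfB /= -mulmxBr -/D trB /D mulmxBr raddfB /= HW mxtrace_scalar.
  by rewrite /S /H -(mulmxA P) (mxtrace_mulC P).
have [dB _] := @key _ _ _ HB.
have [dW _] := @key _ _ _ PW.
have dBW : 0 < \det (invmx B *m W).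
  by rewrite det_mulmx det_inv mulr_gt0 // invr_gt0.
have d1 : \det P * \det P * \det W = 1.
  have := congr1 determinant HP; rewrite !det_mulmx det_tr det1 => <-.
  by rewrite mulrAC.
have dBW' : \det (invmx B *m W') = \det (invmx B *m W) * \det S.
  rewrite /S !det_mulmx det_tr.
  have -> : \det (invmx B) * \det W' = \det (invmx B) * \det W' * (\det P * \det P * \det W).
    by rewrite d1 mulr1.
  by ring.
have lnS : ln (\det (invmx B *m W')) = ln (\det (invmx B *m W)) + ln (\det S).
  by rewrite dBW' lnM ?posrE.
have := sS S1.
rewrite /sdp_obj /= WBn -/W' lnS.
lra.
Qed.
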